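(* There is $J$ such that for all $j\ge J$ the following holds: if $a_{ij}$ and $a_{kl}$ are distinct points in the same cluster, with common potential $t$, then $$a_{kl}-a_{ij}=\frac{2\pi i\,(s_{k(l+H)}-s_{i(j+H)})}{d\,(F^{\circ H})'(t)}\,\nu\,\delta,$$ where $H=H(a_{ij},a_{kl})$, for some $\nu\in A_{t,H-1}$ and $\delta\in D_{i(j+H)}^{k(l+H)}$.
   Context: Setting: $d\ge1$, $f_0=p\circ\exp$ with $p$ monic of degree $d$; orbits $\mathcal{O}_i=\{a_{ij}\}_{j\ge0}$ of $f_0$ ($i=1,\dots,m$) escape on pairwise distinct dynamic rays; $P_f=\bigcup_i\mathcal{O}_i$. $t_{ij}$ is the potential of $a_{ij}$ and $s_{ij}$ the first entry of its external address, with $a_{ij}=t_{ij}+2\pi i s_{ij}/d+O(e^{-t_{ij}/2})$; potentials satisfy $t_{i(j+1)}=F(t_{ij})$ where $F(t)=e^{dt}-1$. Points $a_{ij},a_{kl}$ are in the same cluster if $t_{ij}=t_{kl}$ and $s_{ij}=s_{kl}$. For a pair in the same cluster, $H(a_{ij},a_{kl})$ is the smallest positive integer $H$ such that $a_{i(j+H)}$ and $a_{k(l+H)}$ lie in different clusters. $A_{x,n}$ is the set of $\alpha\neq0$ with $|\log|\alpha||<\sum_{r=0}^n e^{-F^r(x)/3}$ and $|\arg\alpha|<\sum_{r=0}^n e^{-F^r(x)/3}$. For $a_{ij},a_{kl}$ with equal potential in different clusters, $D_{ij}^{kl}:=\left\{\frac{d(w-z)}{2\pi i(s_{kl}-s_{ij})}: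 w\in\mathbb{D}_{1/l}(a_{kl}), z\in\mathbb{D}_{1/j}(a_{ij})\right\}$. *)

(* Defs.v *)
From Stdlib Require Import Reals ZArith List.
From Coquelicot Require Import Coquelicot.
Open Scope R_scope.

Definition cexp (z : C) : C :=
  (exp (fst z) * cos (snd z), exp (fst z) * sin (snd z)).

(* Monic polynomial of degree d: p(w) = w^d + sum_{k<d} c_k w^k,
   where the coefficient list [c : nat -> C] is used for k = 0..d-1. *)
Definition monic_eval (d : nat) (c : nat -> C) (w : C) : C :=
  Cplus (Cpow w d)
    (fold_right Cplus (RtoC 0) (map (fun k => Cmult (c k) (Cpow w k)) (seq 0 d))).

Definition f0 (d : nat) (c : nat -> C) (z : C) : C := monic_eval d c (cexp z).

Definition Fpot (d : nat) (t : R) : R := exp (INR d * t) - 1.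

Definition in_disk (a : C) (r : R) (z : C) : Prop := Cmod (Cminus z a) < r.

Definition is_arg (alpha : C) (theta : R) : Prop :=
  - PI < theta <= PI /\
  alpha = (Cmod alpha * cos theta, Cmod alpha * sin theta).

Definition Abound (d : nat) (x : R) (n : nat) : R :=
  sum_f_R0 (fun r => exp (- (Nat.iter r (Fpot d) x) / 3)) n.

Definition in_A (d : nat) (x : R) (n : nat) (alpha : C) : Prop :=
  alpha <> RtoC 0 /\
  Rabs (ln (Cmod alpha)) < Abound d x n /\
  exists theta, is_arg alpha theta /\ Rabs theta < Abound d x n.

(* Same cluster: equal potential and equal first address entry. *)
Definition same_cluster (t : nat -> nat -> R) (s : nat -> nat -> Z)
  (i j k l : nat) : Prop := t i j = t k l /\ s i j = s k l.

Definition is_Hsep (t : nat -> nat -> R) (s : nat -> nat -> Z)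
  (i j k l H : nat) : Prop :=
  (0 < H)%nat /\ ~ same_cluster t s i (j + H) k (l + H) /\
  forall h, (0 < h < H)%nat -> same_cluster t s i (j + h) k (l + h).

Definition in_D (d : nat) (a : nat -> nat -> C) (s : nat -> nat -> Z)
  (i j k l : nat) (delta : C) : Prop :=
  exists w z, in_disk (a k l) (/ INR l) w /\ in_disk (a i j) (/ INR j) z /\
    delta = Cdiv (Cmult (RtoC (INR d)) (Cminus w z))
                 (Cmult (Cmult (RtoC (2 * PI)) Ci) (RtoC (IZR (s k l - s i j)%Z))).

(* Main.v *)
Require Import Defs.
From Stdlib Require Import Reals ZArith List Lra Lia Psatz.
From Coquelicot Require Import Coquelicot.
Open Scope R_scope.

Lemma exp_bounds (x : R) : Rabs x <= /2 ->
  Rabs (exp x - 1) <= 2 * Rabs x /\ Rabs (exp x - 1 - x) <= 2 * x^2 /\ exp x <= 2.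
Proof.
  intros Hx.
  assert (H1 := exp_ineq1_le x).
  assert (H2 := exp_ineq1_le (-x)).
  assert (He : exp x * exp (-x) = 1) by (rewrite <- exp_plus; replace (x + - x) with 0 by ring; apply exp_0).
  assert (Hp := exp_pos x).
  assert (Hxx : -/2 <= x <= /2) by (apply Rabs_le_between in Hx; lra).
  assert (H3 : exp x * (1 - x) <= 1) by nra.
  assert (H4 : (exp x - 1 - x) * (1 - x) <= x^2) by nra.
  assert (H5 : exp x - 1 - x <= 2 * x^2) by nra.
  split; [|split].
  - apply Rabs_le. destruct (Rle_dec 0 x); [rewrite Rabs_right by lra|rewrite Rabs_left by lra]; nra.
  - apply Rabs_le; nra.
  - nra.
Qed.

Lemma sin_abs_le (y : R) : Rabs (sin y) <= Rabs y.
Proof.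
  destruct (MVT_abs sin cos 0 y) as [c [Hc _]].
  { intros; apply derivable_pt_lim_sin. }
  rewrite sin_0, !Rminus_0_r in Hc. rewrite Hc.
  assert (Rabs (cos c) <= 1) by (apply Rabs_le; apply COS_bound).
  assert (0 <= Rabs y) by apply Rabs_pos. nra.
Qed.

Lemma cos_bound2 (y : R) : 0 <= 1 - cos y <= y^2 / 2.
Proof.
  assert (Hc : cos y = 1 - 2 * sin (y/2) * sin (y/2)).
  { rewrite <- cos_2a_sin. f_equal. field. }
  rewrite Hc.
  assert (H := sin_abs_le (y/2)).
  assert (Rabs (sin (y/2)) * Rabs (sin (y/2)) <= Rabs (y/2) * Rabs (y/2)).
  { apply Rmult_le_compat; auto using Rabs_pos. }
  rewrite <- !Rabs_mult in H0. rewrite !Rabs_right in H0 by (apply Rle_ge, Rle_0_sqr).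
  split; nra.
Qed.

Lemma sin_minus_bound (y : R) : Rabs y <= 2 -> Rabs (sin y - y) <= y^2.
Proof.
  intros Hy.
  destruct (MVT_abs (fun x => sin x - x) (fun x => cos x - 1) 0 y) as [c [Hc Hcr]].
  { intros. apply derivable_pt_lim_minus. apply derivable_pt_lim_sin. apply derivable_pt_lim_id. }
  rewrite sin_0, !Rminus_0_r in Hc. replace (0 - 0) with 0 in Hc by ring. rewrite Hc.
  assert (Hcy : Rabs c <= Rabs y).
  { unfold Rmin, Rmax in Hcr. destruct (Rle_dec 0 y);
    [rewrite (Rabs_right y) by lra; rewrite Rabs_right by lra; lra
    |rewrite (Rabs_left y) by lra; rewrite Rabs_left1 by lra; lra]. }
  assert (Hb := cos_bound2 c).
  rewrite Rabs_minus_sym, (Rabs_right (1 - cos c)) by lra.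
  assert (c^2 <= y^2). { rewrite <- (pow2_abs c), <- (pow2_abs y). assert (0<=Rabs c) by apply Rabs_pos. nra. }
  assert (0 <= Rabs y) by apply Rabs_pos.
  assert ((1 - cos c) * Rabs y <= y^2/2 * 2). { apply Rmult_le_compat; lra. }
  lra.
Qed.
Lemma abs_sq (x : R) : Rabs x * Rabs x = x * x.
Proof. destruct (Rcase_abs x); [rewrite Rabs_left|rewrite Rabs_right]; lra. Qed.

Lemma Cmod_le_sum (z : C) : Cmod z <= Rabs (fst z) + Rabs (snd z).
Proof.
  destruct z as [x y]. unfold Cmod; simpl.
  rewrite <- (sqrt_square (Rabs x + Rabs y)) by (assert (0<=Rabs x) by apply Rabs_pos; assert (0<=Rabs y) by apply Rabs_pos; lra).
  apply sqrt_le_1_alt.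
  assert (H1 := abs_sq x). assert (H2 := abs_sq y).
  assert (0<=Rabs x) by apply Rabs_pos; assert (0<=Rabs y) by apply Rabs_pos. nra.
Qed.

Lemma fst_le_Cmod (z : C) : Rabs (fst z) <= Cmod z.
Proof. assert (H := Rmax_Cmod z). assert (H1 := Rmax_l (Rabs (fst z)) (Rabs (snd z))). lra. Qed.
Lemma snd_le_Cmod (z : C) : Rabs (snd z) <= Cmod z.
Proof. assert (H := Rmax_Cmod z). assert (H1 := Rmax_r (Rabs (fst z)) (Rabs (snd z))). lra. Qed.

Lemma cexp_add (z w : C) : cexp (Cplus z w) = Cmult (cexp z) (cexp w).
Proof.
  destruct z as [a b], w as [c e]. unfold cexp, Cplus, Cmult; simpl.
  rewrite exp_plus, cos_plus, sin_plus. f_equal; ring.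
Qed.

Lemma cexp_0 : cexp (RtoC 0) = RtoC 1.
Proof. unfold cexp, RtoC; simpl. rewrite exp_0, cos_0, sin_0. f_equal; ring. Qed.

Lemma Cmod_cexp (z : C) : Cmod (cexp z) = exp (fst z).
Proof.
  destruct z as [a b]. unfold Cmod, cexp; cbn [fst snd].
  replace ((exp a * cos b) ^ 2 + (exp a * sin b) ^ 2) with (exp a * exp a).
  - apply sqrt_square. apply Rlt_le, exp_pos.
  - assert (H := sin2_cos2 b). unfold Rsqr in H. nra.
Qed.

Lemma cexp_neq0 (z : C) : cexp z <> RtoC 0.
Proof. intro H. assert (H1 := Cmod_cexp z). rewrite H, Cmod_0 in H1. assert (H2 := exp_pos (fst z)). lra. Qed.

Lemma cexp_pow (z : C) (n : nat) : Cpow (cexp z) n = cexp (Cmult (RtoC (INR n)) z).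
Proof.
  induction n.
  - simpl. replace (Cmult (RtoC 0) z) with (RtoC 0). now rewrite cexp_0.
    destruct z; unfold Cmult, RtoC; simpl; f_equal; ring.
  - simpl Cpow. rewrite IHn, <- cexp_add. f_equal. rewrite S_INR.
    destruct z; unfold Cmult, Cplus, RtoC; simpl; f_equal; ring.
Qed.

Lemma cexp_sub1 (w : C) : Cmod w <= /2 -> Cmod (Cminus (cexp w) (RtoC 1)) <= 5 * Cmod w.
Proof.
  intros Hw. destruct w as [x y].
  assert (Hx := fst_le_Cmod (x,y)). assert (Hy := snd_le_Cmod (x,y)). simpl in Hx, Hy.
  eapply Rle_trans. apply Cmod_le_sum. unfold cexp, Cminus, Cplus, Copp, RtoC; simpl.
  destruct (exp_bounds x) as [E1 [E2 E3]]; [lra|].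
  assert (Hc := cos_bound2 y). assert (Hs := sin_abs_le y).
  assert (Hep := exp_pos x).
  replace (exp x * cos y + Ropp 1) with ((exp x - 1) - exp x * (1 - cos y)) by ring.
  replace (exp x * sin y + Ropp 0) with (exp x * sin y) by ring.
  rewrite Rabs_mult, (Rabs_right (exp x)) by lra.
  assert (H1 : Rabs (exp x - 1 - exp x * (1 - cos y)) <= Rabs (exp x - 1) + exp x * (1 - cos y)).
  { eapply Rle_trans. apply Rabs_triang. rewrite Rabs_Ropp, Rabs_mult, (Rabs_right (exp x)), (Rabs_right (1 - cos y)); lra. }
  assert (y^2 <= Cmod (x,y) * Cmod (x,y)). { assert (H9 := abs_sq y). assert (0<=Rabs y) by apply Rabs_pos. nra. }
  assert (0 <= Cmod (x,y)) by apply Cmod_ge_0.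
  assert (exp x * (1 - cos y) <= 2 * (y^2/2)) by (apply Rmult_le_compat; lra).
  assert (exp x * Rabs (sin y) <= 2 * Rabs y) by (apply Rmult_le_compat; try lra; apply Rabs_pos).
  nra.
Qed.

Lemma cexp_sub2 (w : C) : Cmod w <= /2 ->
  Cmod (Cminus (Cminus (cexp w) (RtoC 1)) w) <= 6 * (Cmod w * Cmod w).
Proof.
  intros Hw. destruct w as [x y].
  assert (Hx := fst_le_Cmod (x,y)). assert (Hy := snd_le_Cmod (x,y)). simpl in Hx, Hy.
  eapply Rle_trans. apply Cmod_le_sum. unfold cexp, Cminus, Cplus, Copp, RtoC; simpl.
  destruct (exp_bounds x) as [E1 [E2 E3]]; [lra|].
  assert (Hc := cos_bound2 y). assert (Hs := sin_abs_le y).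
  assert (Hsm := sin_minus_bound y). 
  assert (Hep := exp_pos x).
  replace (exp x * cos y + Ropp 1 + - x) with ((exp x - 1 - x) - exp x * (1 - cos y)) by ring.
  replace (exp x * sin y + Ropp 0 + - y) with ((exp x - 1) * sin y + (sin y - y)) by ring.
  assert (0 <= Cmod (x,y)) by apply Cmod_ge_0.
  assert (Ry : 0<=Rabs y) by apply Rabs_pos. assert (Rx : 0<=Rabs x) by apply Rabs_pos.
  assert (y^2 <= Cmod (x,y) * Cmod (x,y)). { assert (H9 := abs_sq y). nra. }
  assert (x^2 <= Cmod (x,y) * Cmod (x,y)). { assert (H9 := abs_sq x). nra. }
  assert (H1b : Rabs (exp x - 1 - x - exp x * (1 - cos y)) <= Rabs (exp x - 1 - x) + exp x * (1 - cos y)).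
  { eapply Rle_trans. apply Rabs_triang. rewrite Rabs_Ropp, Rabs_mult, (Rabs_right (exp x)), (Rabs_right (1 - cos y)); lra. }
  assert (H2 : Rabs ((exp x - 1) * sin y + (sin y - y)) <= Rabs (exp x - 1) * Rabs (sin y) + Rabs (sin y - y)).
  { eapply Rle_trans. apply Rabs_triang. rewrite Rabs_mult. lra. }
  assert (exp x * (1 - cos y) <= 2 * (y^2/2)) by (apply Rmult_le_compat; lra).
  assert (Rabs (exp x - 1) * Rabs (sin y) <= (2 * Rabs x) * Rabs y) by (apply Rmult_le_compat; auto using Rabs_pos).
  assert (Rabs x * Rabs y <= Cmod (x,y) * Cmod (x,y)) by (apply Rmult_le_compat; lra).
  assert (Hsm' : Rabs (sin y - y) <= y^2) by (apply Hsm; lra).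
  nra.
Qed.

Lemma atan_abs_le (u : R) : Rabs (atan u) <= Rabs u.
Proof.
  destruct (MVT_abs atan (fun x => / (1 + x^2)) 0 u) as [c [Hc _]].
  { intros. apply derivable_pt_lim_atan. }
  rewrite atan_0, !Rminus_0_r in Hc. rewrite Hc.
  assert (0 <= c^2) by (apply pow2_ge_0).
  assert (0 < / (1 + c^2) <= 1).
  { split. apply Rinv_0_lt_compat; lra. rewrite <- Rinv_1. apply Rinv_le_contravar; lra. }
  rewrite (Rabs_right (/ (1 + c^2))) by lra.
  assert (0 <= Rabs u) by apply Rabs_pos. nra.
Qed.

Lemma ln_bounds (x rho : R) : 0 <= rho <= /4 -> 1 - rho <= x <= 1 + rho -> Rabs (ln x) <= 2 * rho.
Proof.
  intros Hr Hx. assert (Hx0 : 0 < x) by lra.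
  apply Rabs_le. split.
  - assert (H := exp_ineq1_le (2 * rho)).
    assert (He : exp (- (2 * rho)) * exp (2 * rho) = 1) by (rewrite <- exp_plus; replace (- (2*rho) + 2*rho) with 0 by ring; apply exp_0).
    assert (exp (- (2 * rho)) <= x).
    { assert (Hp := exp_pos (- (2 * rho))). nra. }
    rewrite <- (ln_exp (- (2 * rho))). apply ln_le; auto. apply exp_pos.
  - assert (H := exp_ineq1_le (ln x)). rewrite exp_ln in H by auto. lra.
Qed.

Lemma log_near1 (X Y : C) (rho : R) : 0 <= rho <= /4 ->
  Cmod (Cminus X Y) <= rho * Cmod Y ->
  exists lam : C, Rabs (fst lam) <= 2 * rho /\ Rabs (snd lam) <= 2 * rho /\
    Cmult X (cexp lam) = Y.
Proof.
  intros Hr HXY.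
  destruct (Ceq_dec Y (RtoC 0)) as [HY|HY].
  { subst Y. rewrite Cmod_0, Rmult_0_r in HXY.
    assert (HX : X = RtoC 0).
    { apply Cmod_eq_0. assert (H0 := Cmod_ge_0 X).
      replace (Cminus X (RtoC 0)) with X in HXY by (unfold Cminus; ring). lra. }
    exists (RtoC 0). rewrite HX. simpl. rewrite Rabs_R0. repeat split; try lra. ring. }
  set (w := Cdiv X Y).
  assert (Hw1 : Cmod (Cminus w (RtoC 1)) <= rho).
  { replace (Cminus w (RtoC 1)) with (Cdiv (Cminus X Y) Y) by (unfold w; field; auto).
    rewrite Cmod_div by auto. apply Cmod_gt_0 in HY.
    apply Rmult_le_reg_r with (Cmod Y); auto. unfold Rdiv. rewrite Rmult_assoc, Rinv_l by lra. lra. }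
  destruct w as [p q] eqn:Ew.
  assert (Hp := fst_le_Cmod (Cminus (p,q) (RtoC 1))). assert (Hq := snd_le_Cmod (Cminus (p,q) (RtoC 1))).
  simpl in Hp, Hq. replace (p + - 1) with (p - 1) in Hp by ring. replace (q + - 0) with q in Hq by ring.
  apply Rabs_le_between in Hp. apply Rabs_le_between in Hq.
  assert (Hp0 : 3/4 <= p) by lra.
  set (r := sqrt (p^2 + q^2)).
  assert (Hr2 : r * r = p^2 + q^2) by (apply sqrt_sqrt; nra).
  assert (Hrp : p <= r). { unfold r. apply Rle_trans with (sqrt (p*p)). rewrite sqrt_square by lra; lra. apply sqrt_le_1_alt. nra. }
  assert (Hcm : r = Cmod (p,q)) by reflexivity.
  assert (Hrb : 1 - rho <= r <= 1 + rho).
  { assert (Ht1 := Cmod_triangle (Cminus (p,q) (RtoC 1)) (RtoC 1)).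
    assert (Ht2 := Cmod_triangle (RtoC 1) (Copp (Cminus (p,q) (RtoC 1)))).
    replace (Cplus (Cminus (p, q) (RtoC 1)) (RtoC 1)) with (p,q) in Ht1 by (unfold Cminus, Cplus, Copp, RtoC; cbn [fst snd]; f_equal; ring).
    replace (Cplus (RtoC 1) (Copp (Cminus (p, q) (RtoC 1)))) with (Cminus (RtoC 2) (p,q)) in Ht2.
    2:{ unfold Cminus, Copp, Cplus, RtoC; simpl; f_equal; ring. }
    rewrite Cmod_opp, Cmod_1 in Ht2. rewrite Cmod_1 in Ht1. rewrite <- Hcm in Ht1.
    split; [|lra]. lra. }
  exists (- ln r, - atan (q / p)). cbn [fst snd]. rewrite !Rabs_Ropp. split; [|split].
  - apply ln_bounds; lra.
  - eapply Rle_trans. apply atan_abs_le. unfold Rdiv. rewrite Rabs_mult, Rabs_inv, (Rabs_right p) by lra.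
    apply Rabs_le_between in Hw1 || idtac.
    assert (Rabs q <= rho) by (apply Rabs_le; lra).
    apply Rmult_le_reg_r with p; [lra|]. rewrite Rmult_assoc, Rinv_l by lra. nra.
  - assert (HX : X = Cmult (p,q) Y). { rewrite <- Ew. unfold w. field. auto. }
    assert (Hr0 : 0 < r) by lra.
    assert (Hs : sqrt (1 + (q/p)²) = r / p).
    { apply Rsqr_inj. apply sqrt_pos. apply Rlt_le. apply Rdiv_lt_0_compat; lra.
      rewrite Rsqr_sqrt. replace ((r/p)²) with ((r*r)/(p*p)) by (unfold Rsqr; field; lra). rewrite Hr2. unfold Rsqr. field. lra.
      apply Rplus_le_le_0_compat. lra. apply Rle_0_sqr. }
    assert (Hc : cexp (- ln r, - atan (q / p)) = (p / (r * r), - q / (r * r))).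
    { unfold cexp; cbn [fst snd]. rewrite cos_neg, sin_neg, cos_atan, sin_atan, Hs.
      rewrite exp_Ropp, exp_ln by lra. f_equal; field; lra. }
    rewrite HX, Hc. rewrite <- Cmult_assoc, (Cmult_comm Y), Cmult_assoc.
    replace (Cmult (p, q) (p / (r * r), - q / (r * r))) with (RtoC 1). ring.
    unfold Cmult, RtoC; cbn [fst snd]. f_equal; field_simplify; try lra. replace (r^2) with (r*r) by ring. rewrite Hr2. field. nra.
Qed.

Lemma Cpow_diff (u v : C) (R0 : R) (n : nat) : Cmod u <= R0 -> Cmod v <= R0 ->
  Cmod (Cminus (Cpow u n) (Cpow v n)) * R0 <= INR n * R0 ^ n * Cmod (Cminus u v).
Proof.
  intros Hu Hv. assert (HR : 0 <= R0) by (assert (H := Cmod_ge_0 u); lra).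
  induction n.
  - simpl. replace (Cminus (RtoC 1) (RtoC 1)) with (RtoC 0) by (unfold Cminus; ring).
    rewrite Cmod_0. lra.
  - simpl Cpow.
    replace (Cminus (Cmult u (Cpow u n)) (Cmult v (Cpow v n)))
      with (Cplus (Cmult u (Cminus (Cpow u n) (Cpow v n))) (Cmult (Cminus u v) (Cpow v n)))
      by (unfold Cminus; ring).
    assert (Ht := Cmod_triangle (Cmult u (Cminus (Cpow u n) (Cpow v n))) (Cmult (Cminus u v) (Cpow v n))).
    rewrite !Cmod_mult, Cmod_pow in Ht.
    assert (Hvn : Cmod v ^ n <= R0 ^ n) by (apply pow_incr; split; [apply Cmod_ge_0|auto]).
    assert (H0 := Cmod_ge_0 (Cminus (Cpow u n) (Cpow v n))).
    assert (H1 := Cmod_ge_0 (Cminus u v)).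
    assert (H2 := Cmod_ge_0 u).
    assert (H3 : Cmod u * Cmod (Cminus (Cpow u n) (Cpow v n)) * R0 <= R0 * (INR n * R0 ^ n * Cmod (Cminus u v))).
    { rewrite Rmult_assoc. apply Rmult_le_compat; auto. apply Rmult_le_pos; auto. }
    assert (H4 : Cmod (Cminus u v) * Cmod v ^ n * R0 <= Cmod (Cminus u v) * R0 ^ n * R0).
    { apply Rmult_le_compat_r; auto. apply Rmult_le_compat_l; auto. }
    rewrite S_INR. simpl pow.
    apply Rle_trans with ((Cmod u * Cmod (Cminus (Cpow u n) (Cpow v n)) + Cmod (Cminus u v) * Cmod v ^ n) * R0).
    apply Rmult_le_compat_r; auto. nra.
Qed.

Definition lowp (c : nat -> C) (l : list nat) (u : C) : C :=
  fold_right Cplus (RtoC 0) (map (fun k => Cmult (c k) (Cpow u k)) l).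
Definition sumabs (c : nat -> C) (l : list nat) : R :=
  fold_right Rplus 0 (map (fun k => Cmod (c k)) l).

Lemma sumabs_nonneg c l : 0 <= sumabs c l.
Proof. unfold sumabs. induction l; simpl. lra. assert (H := Cmod_ge_0 (c a)). lra. Qed.

Lemma lowp_diff (d : nat) (c : nat -> C) (l : list nat) (u v : C) (R0 : R) :
  1 <= R0 -> Cmod u <= R0 -> Cmod v <= R0 -> (forall k, In k l -> (k < d)%nat) ->
  Cmod (Cminus (lowp c l u) (lowp c l v)) * R0 * R0 <= sumabs c l * INR d * R0 ^ d * Cmod (Cminus u v).
Proof.
  intros HR Hu Hv Hl. induction l as [|k l IH].
  - unfold lowp, sumabs; simpl. replace (Cminus (RtoC 0) (RtoC 0)) with (RtoC 0) by (unfold Cminus; ring).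
    rewrite Cmod_0. lra.
  - unfold lowp, sumabs in *. simpl.
    replace (Cminus (Cplus (Cmult (c k) (Cpow u k)) (fold_right Cplus (RtoC 0) (map (fun k0 : nat => Cmult (c k0) (Cpow u k0)) l)))
         (Cplus (Cmult (c k) (Cpow v k)) (fold_right Cplus (RtoC 0) (map (fun k0 : nat => Cmult (c k0) (Cpow v k0)) l))))
      with (Cplus (Cmult (c k) (Cminus (Cpow u k) (Cpow v k)))
             (Cminus (fold_right Cplus (RtoC 0) (map (fun k0 : nat => Cmult (c k0) (Cpow u k0)) l))
                     (fold_right Cplus (RtoC 0) (map (fun k0 : nat => Cmult (c k0) (Cpow v k0)) l))))
      by (unfold Cminus; ring).
    assert (IH' := IH (fun k' H' => Hl k' (or_intror H'))).
    assert (Hk : (k < d)%nat) by (apply Hl; left; auto).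
    assert (Ht := Cmod_triangle (Cmult (c k) (Cminus (Cpow u k) (Cpow v k)))
             (Cminus (fold_right Cplus (RtoC 0) (map (fun k0 : nat => Cmult (c k0) (Cpow u k0)) l))
                     (fold_right Cplus (RtoC 0) (map (fun k0 : nat => Cmult (c k0) (Cpow v k0)) l)))).
    rewrite Cmod_mult in Ht.
    assert (Hd := Cpow_diff u v R0 k Hu Hv).
    assert (Hkd : INR k * R0 ^ k * R0 <= INR d * R0 ^ d).
    { replace (R0 ^ d) with (R0 ^ (S k) * R0 ^ (d - S k)) by (rewrite <- pow_add; f_equal; lia).
      assert (1 <= R0 ^ (d - S k)) by (apply pow_R1_Rle; lra).
      assert (INR k <= INR d) by (apply le_INR; lia).
      assert (0 <= INR k) by apply pos_INR.
      assert (1 <= R0 ^ S k) by (apply pow_R1_Rle; lra).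
      simpl pow in *. set (P := R0 * R0 ^ k) in *.
      set (Y := R0 ^ (d - S k)) in *.
      replace (INR k * R0 ^ k * R0) with (INR k * P) by (unfold P; ring).
      replace (INR d * (P * Y)) with (P * (INR d * Y)) by ring.
      assert (INR d * 1 <= INR d * Y) by (apply Rmult_le_compat_l; lra).
      replace (INR k * P) with (P * INR k) by ring.
      apply Rmult_le_compat_l; lra. }
    assert (Hck := Cmod_ge_0 (c k)). assert (Huv := Cmod_ge_0 (Cminus u v)).
    assert (HA : Cmod (c k) * Cmod (Cminus (Cpow u k) (Cpow v k)) * R0 * R0 <= Cmod (c k) * INR d * R0 ^ d * Cmod (Cminus u v)).
    { apply Rle_trans with (Cmod (c k) * (INR k * R0 ^ k * Cmod (Cminus u v)) * R0).
      rewrite (Rmult_assoc (Cmod (c k))). apply Rmult_le_compat_r. lra. apply Rmult_le_compat_l; auto.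
      replace (Cmod (c k) * (INR k * R0 ^ k * Cmod (Cminus u v)) * R0) with (Cmod (c k) * Cmod (Cminus u v) * (INR k * R0 ^ k * R0)) by ring.
      replace (Cmod (c k) * INR d * R0 ^ d * Cmod (Cminus u v)) with (Cmod (c k) * Cmod (Cminus u v) * (INR d * R0 ^ d)) by ring.
      apply Rmult_le_compat_l; auto. apply Rmult_le_pos; auto. }
    set (Dl := Cmod (Cminus (fold_right Cplus (RtoC 0) (map (fun k0 : nat => Cmult (c k0) (Cpow u k0)) l))
                     (fold_right Cplus (RtoC 0) (map (fun k0 : nat => Cmult (c k0) (Cpow v k0)) l)))) in *.
    set (T := Cmod (Cplus (Cmult (c k) (Cminus (Cpow u k) (Cpow v k))) _)) in *.
    assert (0 <= R0 * R0) by nra.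
    apply Rle_trans with ((Cmod (c k) * Cmod (Cminus (Cpow u k) (Cpow v k)) + Dl) * (R0 * R0)).
    rewrite Rmult_assoc. apply Rmult_le_compat_r; auto.
    nra.
Qed.

Lemma exp_pow_INR (x : R) (n : nat) : exp x ^ n = exp (INR n * x).
Proof.
  induction n. simpl. rewrite Rmult_0_l, exp_0. auto.
  simpl pow. rewrite IHn, <- exp_plus, S_INR. f_equal. ring.
Qed.

Definition bpt (d : nat) (tau : R) (s : Z) : C :=
  Cplus (RtoC tau) (Cmult (Cmult (RtoC (2 * PI)) Ci) (RtoC (IZR s / INR d))).

Lemma fst_bpt d tau s : fst (bpt d tau s) = tau.
Proof. unfold bpt, Cplus, Cmult, RtoC, Ci; simpl. ring. Qed.

Lemma cexp_bpt (d : nat) (tau : R) (s : Z) : (1 <= d)%nat ->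
  cexp (Cmult (RtoC (INR d)) (bpt d tau s)) = RtoC (exp (INR d * tau)).
Proof.
  intros Hd. assert (HD : INR d <> 0) by (apply not_0_INR; lia).
  assert (Hs : sin (IZR s * PI) = 0) by (apply sin_eq_0_1; exists s; auto).
  assert (Hc : cos (IZR s * PI) * cos (IZR s * PI) = 1) by (assert (H := sin2_cos2 (IZR s * PI)); unfold Rsqr in H; rewrite Hs in H; lra).
  assert (E1 : fst (Cmult (RtoC (INR d)) (bpt d tau s)) = INR d * tau) by (unfold bpt, Cplus, Cmult, RtoC, Ci; simpl; field; auto).
  assert (E2 : snd (Cmult (RtoC (INR d)) (bpt d tau s)) = 2 * (IZR s * PI)) by (unfold bpt, Cplus, Cmult, RtoC, Ci; simpl; field; auto).
  unfold cexp. rewrite E1, E2.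
  rewrite cos_2a, sin_2a, Hs, Hc. unfold RtoC. f_equal; ring.
Qed.

Lemma exp_le x y : x <= y -> exp x <= exp y.
Proof. intros [H|H]. left; apply exp_increasing; auto. subst; lra. Qed.

Lemma fst_Cplus (z w : C) : fst (Cplus z w) = fst z + fst w.
Proof. reflexivity. Qed.

Lemma f0_split d c u : f0 d c u = Cplus (Cpow (cexp u) d) (lowp c (seq 0 d) (cexp u)).
Proof. reflexivity. Qed.

Lemma Cmod_RtoC_mult (x : R) (z : C) : 0 <= x -> Cmod (Cmult (RtoC x) z) = x * Cmod z.
Proof. intros. rewrite Cmod_mult, Cmod_R, Rabs_right; lra. Qed.

Lemma step_bound (d : nat) (c : nat -> C) (K tau : R) (s : Z) (A B : C) :
  (1 <= d)%nat -> 1 <= K -> 0 <= tau ->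
  (37 * INR d * K + 5 * sumabs c (seq 0 d) * exp (INR d - 1)) * exp (- tau / 6) <= /4 ->
  Cmod (Cminus A (bpt d tau s)) <= K * exp (- tau / 2) ->
  Cmod (Cminus B (bpt d tau s)) <= K * exp (- tau / 2) ->
  Cmod (Cminus (Cminus (f0 d c B) (f0 d c A)) (Cmult (RtoC (INR d * exp (INR d * tau))) (Cminus B A)))
   <= exp (- tau / 3) / 4 * Cmod (Cmult (RtoC (INR d * exp (INR d * tau))) (Cminus B A)).
Proof.
  intros Hd HK Ht HM HA HB.
  set (D := INR d) in *. set (E := exp (D * tau)) in *.
  set (b := bpt d tau s) in *.
  set (S := sumabs c (seq 0 d)) in *.
  set (eA := Cminus A b) in *. set (eB := Cminus B b) in *. set (dl := Cminus B A).
  set (e := K * exp (- tau / 2)) in *.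
  assert (HD1 : 1 <= D) by (unfold D; replace 1 with (INR 1) by reflexivity; apply le_INR; auto).
  assert (HE : 0 < E) by apply exp_pos.
  assert (HS : 0 <= S) by apply sumabs_nonneg.
  set (x6 := exp (- tau / 6)) in *. set (x3 := exp (- tau / 3)). set (x2 := exp (- tau / 2)) in *.
  assert (Hx2 : x2 = x6 * x3) by (unfold x2, x6, x3; rewrite <- exp_plus; f_equal; field).
  assert (Hx6 : 0 < x6 <= 1) by (split; [apply exp_pos|unfold x6; rewrite <- exp_0; apply exp_le; lra]).
  assert (Hx3 : 0 < x3 <= 1).
  { split. apply exp_pos. unfold x3. rewrite <- exp_0. destruct (Req_dec tau 0) as [Z|Z].
    right. f_equal. rewrite Z. field. left. apply exp_increasing. lra. }
  assert (Hx1 : exp (- tau) <= x2).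
  { unfold x2. destruct (Req_dec tau 0) as [Z|Z]. right. f_equal. rewrite Z. field.
    left. apply exp_increasing. lra. }
  assert (Hem1 : 0 < exp (D - 1)) by apply exp_pos.
  assert (HSe : 0 <= 5 * S * exp (D - 1)) by (apply Rmult_le_pos; lra).
  assert (He0 : 0 <= e) by (unfold e; apply Rmult_le_pos; [lra|apply Rlt_le, exp_pos]).
  assert (HDe : 37 * D * e <= /4).
  { unfold e. fold x2. rewrite Hx2.
    assert (37 * D * K * x6 <= /4) by nra. nra. }
  assert (HeA0 := Cmod_ge_0 eA).
  assert (Hdl : Cmod dl <= 2 * e).
  { replace dl with (Cminus eB eA) by (unfold dl, eB, eA, Cminus; ring).
    eapply Rle_trans. apply Cmod_triangle. rewrite Cmod_opp. lra. }
  assert (Hdl0 := Cmod_ge_0 dl).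
  assert (EA : A = Cplus b eA) by (unfold eA, Cminus; ring).
  assert (EB : B = Cplus (Cplus b eA) dl) by (unfold dl, eA, Cminus; ring).
  assert (Hud : Cpow (cexp B) d = Cmult (RtoC E) (Cmult (cexp (Cmult (RtoC D) eA)) (cexp (Cmult (RtoC D) dl)))).
  { rewrite cexp_pow. fold D. rewrite EB.
    replace (Cmult (RtoC D) (Cplus (Cplus b eA) dl)) with (Cplus (Cmult (RtoC D) b) (Cplus (Cmult (RtoC D) eA) (Cmult (RtoC D) dl))) by ring.
    rewrite !cexp_add. unfold b, D. rewrite cexp_bpt by auto. reflexivity. }
  assert (Hvd : Cpow (cexp A) d = Cmult (RtoC E) (cexp (Cmult (RtoC D) eA))).
  { rewrite cexp_pow. fold D. rewrite EA.
    replace (Cmult (RtoC D) (Cplus b eA)) with (Cplus (Cmult (RtoC D) b) (Cmult (RtoC D) eA)) by ring.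
    rewrite !cexp_add. unfold b, D. rewrite cexp_bpt by auto. reflexivity. }
  rewrite !f0_split, Hud, Hvd.
  set (P := cexp (Cmult (RtoC D) eA)). set (Q := cexp (Cmult (RtoC D) dl)).
  set (Lo := Cminus (lowp c (seq 0 d) (cexp B)) (lowp c (seq 0 d) (cexp A))).
  replace (Cminus (Cminus (Cplus (Cmult (RtoC E) (Cmult P Q)) (lowp c (seq 0 d) (cexp B)))
            (Cplus (Cmult (RtoC E) P) (lowp c (seq 0 d) (cexp A)))) (Cmult (RtoC (D * E)) dl))
    with (Cplus (Cmult (RtoC E) (Cplus (Cmult (Cminus P (RtoC 1)) (Cminus Q (RtoC 1)))
              (Cminus (Cminus Q (RtoC 1)) (Cmult (RtoC D) dl)))) Lo).
  2:{ unfold Lo, Cminus. rewrite RtoC_mult. ring. }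
  rewrite (Cmod_RtoC_mult (D * E)) by nra.
  assert (HDeA : Cmod (Cmult (RtoC D) eA) <= D * e) by (rewrite Cmod_RtoC_mult by lra; apply Rmult_le_compat_l; lra).
  assert (HDdl : Cmod (Cmult (RtoC D) dl) = D * Cmod dl) by (apply Cmod_RtoC_mult; lra).
  assert (HP : Cmod (Cminus P (RtoC 1)) <= 5 * (D * e)).
  { eapply Rle_trans. apply cexp_sub1. lra. lra. }
  assert (HQ : Cmod (Cminus Q (RtoC 1)) <= 5 * (D * Cmod dl)).
  { rewrite <- HDdl. apply cexp_sub1. rewrite HDdl. nra. }
  assert (HQ2 : Cmod (Cminus (Cminus Q (RtoC 1)) (Cmult (RtoC D) dl)) <= 6 * ((D * Cmod dl) * (D * Cmod dl))).
  { rewrite <- HDdl. apply cexp_sub2. rewrite HDdl. nra. }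
  assert (HPQ0 := Cmod_ge_0 (Cminus P (RtoC 1))). assert (HQ0 := Cmod_ge_0 (Cminus Q (RtoC 1))).
  assert (Hmain : Cmod (Cmult (RtoC E) (Cplus (Cmult (Cminus P (RtoC 1)) (Cminus Q (RtoC 1)))
              (Cminus (Cminus Q (RtoC 1)) (Cmult (RtoC D) dl)))) <= 37 * D * e * (D * E * Cmod dl)).
  { rewrite Cmod_RtoC_mult by lra.
    assert (Ht1 := Cmod_triangle (Cmult (Cminus P (RtoC 1)) (Cminus Q (RtoC 1))) (Cminus (Cminus Q (RtoC 1)) (Cmult (RtoC D) dl))).
    rewrite Cmod_mult in Ht1.
    assert (H1 : Cmod (Cminus P (RtoC 1)) * Cmod (Cminus Q (RtoC 1)) <= (5 * (D * e)) * (5 * (D * Cmod dl))) by (apply Rmult_le_compat; lra).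
    assert (H2a : (D * Cmod dl) * (D * Cmod dl) <= (D * Cmod dl) * (D * (2 * e))).
    { apply Rmult_le_compat_l. apply Rmult_le_pos; lra. apply Rmult_le_compat_l; lra. }
    assert (H2 : 6 * ((D * Cmod dl) * (D * Cmod dl)) <= 12 * D * e * (D * Cmod dl)) by lra.
    nra. }
  set (R0 := exp (tau + 1)).
  assert (HR1 : 1 <= R0) by (unfold R0; apply Rle_trans with (1 + (tau + 1)); [lra | apply exp_ineq1_le]).
  assert (HeS : e <= 1) by nra.
  assert (HuB : Cmod (cexp B) <= R0).
  { rewrite Cmod_cexp. unfold R0. apply exp_le.
    rewrite EB. assert (Hf1 := fst_le_Cmod eA). assert (Hf2 := fst_le_Cmod dl).
    rewrite !fst_Cplus. unfold b. rewrite fst_bpt.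
    apply Rabs_le_between in Hf1. apply Rabs_le_between in Hf2. nra. }
  assert (HvA : Cmod (cexp A) <= R0).
  { rewrite Cmod_cexp. unfold R0. apply exp_le.
    rewrite EA. assert (Hf1 := fst_le_Cmod eA). rewrite !fst_Cplus. unfold b. rewrite fst_bpt.
    apply Rabs_le_between in Hf1. nra. }
  assert (Huv : Cmod (Cminus (cexp B) (cexp A)) <= R0 * (5 * Cmod dl)).
  { replace B with (Cplus A dl) by (unfold dl, Cminus; ring). rewrite cexp_add.
    replace (Cminus (Cmult (cexp A) (cexp dl)) (cexp A)) with (Cmult (cexp A) (Cminus (cexp dl) (RtoC 1))) by (unfold Cminus; ring).
    rewrite Cmod_mult. apply Rmult_le_compat; auto using Cmod_ge_0. apply cexp_sub1. nra. }
  assert (HLo := lowp_diff d c (seq 0 d) (cexp B) (cexp A) R0 HR1 HuB HvA).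
  assert (HLo' : Cmod Lo * R0 * R0 <= S * D * R0 ^ d * (R0 * (5 * Cmod dl))).
  { eapply Rle_trans. apply HLo. intros k Hk. apply in_seq in Hk. lia.
    fold S. fold D. assert (0 < R0 ^ d) by (apply pow_lt; lra). apply Rmult_le_compat_l; [|exact Huv]. apply Rmult_le_pos; [apply Rmult_le_pos|]; lra. }
  assert (HRd : R0 ^ d = E * exp D) by (unfold R0; rewrite exp_pow_INR; fold D; unfold E; rewrite <- exp_plus; f_equal; ring).
  assert (HeD : exp D = exp (D - 1) * exp (- tau) * R0) by (unfold R0; rewrite <- !exp_plus; f_equal; ring).
  assert (HLo2 : Cmod Lo <= 5 * S * exp (D - 1) * exp (- tau) * (D * E * Cmod dl)).
  { rewrite HRd, HeD in HLo'.
    assert (HLo0 := Cmod_ge_0 Lo).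
    apply Rmult_le_reg_r with (R0 * R0). nra.
    replace (5 * S * exp (D - 1) * exp (- tau) * (D * E * Cmod dl) * (R0 * R0)) with
      (S * D * (E * (exp (D - 1) * exp (- tau) * R0)) * (R0 * (5 * Cmod dl))) by ring.
    lra. }
  eapply Rle_trans. apply Cmod_triangle.
  assert (HDEd : 0 <= D * E * Cmod dl) by (apply Rmult_le_pos; nra).
  assert (Hcoef : 37 * D * e + 5 * S * exp (D - 1) * exp (- tau) <= x3 / 4).
  { unfold e. fold x2.
    assert (5 * S * exp (D - 1) * exp (- tau) <= 5 * S * exp (D - 1) * x2) by (apply Rmult_le_compat_l; lra).
    assert ((37 * D * K + 5 * S * exp (D - 1)) * x2 <= x3 / 4).
    { rewrite Hx2. replace ((37 * D * K + 5 * S * exp (D - 1)) * (x6 * x3)) with (((37 * D * K + 5 * S * exp (D - 1)) * x6) * x3) by ring.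
      apply Rle_trans with (/4 * x3). apply Rmult_le_compat_r; lra. lra. }
    nra. }
  assert (Hfin : 37 * D * e * (D * E * Cmod dl) + 5 * S * exp (D - 1) * exp (- tau) * (D * E * Cmod dl) <= x3 / 4 * (D * E * Cmod dl)).
  { rewrite <- Rmult_plus_distr_r. apply Rmult_le_compat_r; auto. }
  lra.
Qed.

Lemma step_lambda (d : nat) (c : nat -> C) (K tau : R) (s : Z) (A B : C) :
  (1 <= d)%nat -> 1 <= K -> 0 <= tau ->
  (37 * INR d * K + 5 * sumabs c (seq 0 d) * exp (INR d - 1)) * exp (- tau / 6) <= /4 ->
  Cmod (Cminus A (bpt d tau s)) <= K * exp (- tau / 2) ->
  Cmod (Cminus B (bpt d tau s)) <= K * exp (- tau / 2) ->
  exists lam : C, Rabs (fst lam) <= exp (- tau / 3) / 2 /\ Rabs (snd lam) <= exp (- tau / 3) / 2 /\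
    Cmult (Cminus (f0 d c B) (f0 d c A)) (cexp lam) = Cmult (RtoC (INR d * exp (INR d * tau))) (Cminus B A).
Proof.
  intros. assert (H5 := step_bound d c K tau s A B H H0 H1 H2 H3 H4).
  assert (Hx : 0 < exp (- tau / 3) <= 1).
  { split. apply exp_pos. rewrite <- exp_0. apply exp_le. lra. }
  assert (Hr : 0 <= exp (- tau / 3) / 4 <= /4) by lra.
  destruct (log_near1 _ _ _ Hr H5) as [lam [L1 [L2 L3]]].
  exists lam. split; [lra|split; [lra|auto]].
Qed.

Lemma Tstar_ok (M tau : R) : 0 <= M -> 6 * ln (4 * M + 1) <= tau -> M * exp (- tau / 6) <= /4.
Proof.
  intros HM Ht.
  assert (H1 : exp (ln (4 * M + 1)) <= exp (tau / 6)) by (apply exp_le; lra).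
  rewrite exp_ln in H1 by lra.
  assert (He : exp (- tau / 6) * exp (tau / 6) = 1) by (rewrite <- exp_plus; replace (- tau / 6 + tau / 6) with 0 by field; apply exp_0).
  assert (Hp := exp_pos (- tau / 6)). nra.
Qed.

Lemma Fpot_grow (d : nat) (x : R) : (1 <= d)%nat -> 0 <= x -> x + x * x / 4 <= Fpot d x.
Proof.
  intros Hd Hx. unfold Fpot.
  assert (HD : 1 <= INR d) by (replace 1 with (INR 1) by reflexivity; apply le_INR; auto).
  assert (H1 : exp x <= exp (INR d * x)) by (apply exp_le; nra).
  assert (H2 : exp x = exp (x/2) * exp (x/2)) by (rewrite <- exp_plus; f_equal; field).
  assert (H3 := exp_ineq1_le (x/2)). nra.
Qed.

Lemma iter_ge (d : nat) (x : R) (n : nat) : (1 <= d)%nat -> 0 <= x -> x <= Nat.iter n (Fpot d) x.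
Proof.
  intros Hd Hx. induction n. simpl; lra.
  simpl. assert (H := Fpot_grow d (Nat.iter n (Fpot d) x) Hd ltac:(lra)). nra.
Qed.

Lemma halving (d : nat) (x : R) : (1 <= d)%nat -> 4 <= x -> exp (- Fpot d x / 3) <= exp (- x / 3) / 2.
Proof.
  intros Hd Hx. assert (H := Fpot_grow d x Hd ltac:(lra)).
  assert (H1 : exp (- Fpot d x / 3) <= exp (- x / 3 + - 1)) by (apply exp_le; nra).
  rewrite exp_plus in H1.
  assert (H2 : exp 1 * exp (-1) = 1) by (rewrite <- exp_plus; replace (1 + -1) with 0 by ring; apply exp_0).
  assert (H3 := exp_ineq1_le 1). assert (H4 := exp_pos (-1)). assert (H5 := exp_pos (- x / 3)).
  assert (exp (-1) <= /2) by nra. nra.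
Qed.

Fixpoint Dn (d : nat) (n : nat) (x : R) : R :=
  match n with
  | O => 1
  | S n' => INR d * exp (INR d * Nat.iter n' (Fpot d) x) * Dn d n' x
  end.

Lemma Dn_pos d n x : (1 <= d)%nat -> 0 < Dn d n x.
Proof.
  intros Hd. induction n; simpl. lra.
  assert (0 < INR d) by (apply lt_0_INR; lia). assert (H1 := exp_pos (INR d * Nat.iter n (Fpot d) x)).
  apply Rmult_lt_0_compat; auto. apply Rmult_lt_0_compat; auto.
Qed.

Lemma iter_derive d n x : is_derive (fun y => Nat.iter n (Fpot d) y) x (Dn d n x).
Proof.
  induction n.
  - simpl. apply (is_derive_id x).
  - simpl.
    assert (HF : is_derive (Fpot d) (Nat.iter n (Fpot d) x) (INR d * exp (INR d * Nat.iter n (Fpot d) x))).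
    { unfold Fpot. auto_derive; auto. ring. }
    assert (Hc := is_derive_comp (Fpot d) (fun y => Nat.iter n (Fpot d) y) x _ _ HF IHn).
    replace (INR d * exp (INR d * Nat.iter n (Fpot d) x) * Dn d n x) with (scal (Dn d n x) (INR d * exp (INR d * Nat.iter n (Fpot d) x))).
    exact Hc. unfold scal; simpl; unfold mult; simpl; ring.
Qed.

Lemma fin_J (m : nat) (P : nat -> nat -> Prop) :
  (forall i J J', (J <= J')%nat -> P i J -> P i J') ->
  (forall i, (i < m)%nat -> exists J, P i J) -> exists J, forall i, (i < m)%nat -> P i J.
Proof.
  intros Hmono. induction m; intros Hex.
  - exists O. intros; lia.
  - destruct IHm as [J1 HJ1]. intros; apply Hex; lia.
    destruct (Hex m ltac:(lia)) as [J2 HJ2].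
    exists (Nat.max J1 J2). intros i Hi.
    destruct (Nat.eq_dec i m). subst. apply Hmono with J2; auto; lia.
    apply Hmono with J1; auto. lia. apply HJ1; lia.
Qed.

Fixpoint Sp (d : nat) (x : R) (n : nat) : R :=
  match n with O => 0 | S n' => Sp d x n' + exp (- Nat.iter n' (Fpot d) x / 3) end.

Lemma Sp_Abound d x n : Sp d x (S n) = Abound d x n.
Proof.
  induction n. simpl. unfold Abound. simpl. lra.
  unfold Abound in *. change (Sp d x (S (S n))) with (Sp d x (S n) + exp (- Nat.iter (S n) (Fpot d) x / 3)).
  rewrite IHn. reflexivity.
Qed.

Lemma Sp_bound d x n : (1 <= d)%nat -> 4 <= x -> Sp d x n + 2 * exp (- Nat.iter n (Fpot d) x / 3) <= 2 * exp (- x / 3).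
Proof.
  intros Hd Hx. induction n. simpl. lra.
  simpl Sp. assert (H := halving d (Nat.iter n (Fpot d) x) Hd).
  assert (H1 := iter_ge d x n Hd ltac:(lra)).
  change (Nat.iter (S n) (Fpot d) x) with (Fpot d (Nat.iter n (Fpot d) x)). 
  specialize (H ltac:(lra)). lra.
Qed.

Lemma Sp_pos d x n : (0 < n)%nat -> 0 < Sp d x n.
Proof.
  intros Hn. induction n. lia. simpl. destruct n. simpl. assert (H0 := exp_pos (- x / 3)). lra.
  assert (H := IHn ltac:(lia)). assert (H1 := exp_pos (- Nat.iter (S n) (Fpot d) x / 3)). lra.
Qed.

Lemma RtoC_neq0 (x : R) : x <> 0 -> RtoC x <> RtoC 0.
Proof. intros H E. apply H. apply (f_equal fst) in E. exact E. Qed.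

Theorem mainTheorem5
  (d : nat) (c : nat -> C) (m : nat)
  (a : nat -> nat -> C) (t : nat -> nat -> R) (s : nat -> nat -> Z)
  (hd : (1 <= d)%nat)
  (horbit : forall i j, (i < m)%nat -> a i (S j) = f0 d c (a i j))
  (htpos : forall i j, (i < m)%nat -> 0 < t i j)
  (htF : forall i j, (i < m)%nat -> t i (S j) = Fpot d (t i j))
  (hasym : exists K, forall i j, (i < m)%nat ->
      Cmod (Cminus (a i j)
              (Cplus (RtoC (t i j))
                 (Cmult (Cmult (RtoC (2 * PI)) Ci) (RtoC (IZR (s i j) / INR d)))))
      <= K * exp (- t i j / 2)) :
  exists J : nat, forall i j k l, (J <= j)%nat -> (i < m)%nat -> (k < m)%nat ->
    a i j <> a k l -> same_cluster t s i j k l ->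
    forall H, is_Hsep t s i j k l H ->
    exists nu delta,
      in_A d (t i j) (H - 1) nu /\
      in_D d a s i (j + H) k (l + H) delta /\
      Cminus (a k l) (a i j) =
        Cmult (Cmult
          (Cdiv (Cmult (Cmult (RtoC (2 * PI)) Ci)
                       (RtoC (IZR (s k (l + H)%nat - s i (j + H)%nat)%Z)))
                (Cmult (RtoC (INR d)) (RtoC (Derive (fun x => Nat.iter H (Fpot d) x) (t i j)))))
          nu) delta.
Proof.
  destruct hasym as [K0 HK0].
  set (K := Rmax 1 K0).
  assert (HK1 : 1 <= K) by apply Rmax_l.
  assert (HKK0 : K0 <= K) by apply Rmax_r.
  set (M := 37 * INR d * K + 5 * sumabs c (seq 0 d) * exp (INR d - 1)).
  assert (HD1 : 1 <= INR d) by (replace 1 with (INR 1) by reflexivity; apply le_INR; auto).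
  assert (HM : 0 <= M).
  { unfold M. assert (H1 := sumabs_nonneg c (seq 0 d)). assert (H2 := exp_pos (INR d - 1)).
    assert (0 <= 5 * sumabs c (seq 0 d) * exp (INR d - 1)) by (apply Rmult_le_pos; lra). nra. }
  set (T := 6 * ln (4 * M + 1) + 4).
  assert (Hln : 0 <= ln (4 * M + 1)) by (rewrite <- ln_1; apply ln_le; lra).
  assert (HT4 : 4 <= T) by (unfold T; lra).
  assert (Hgrow : forall i j, (i < m)%nat -> t i 0%nat + INR j * (t i 0%nat * t i 0%nat / 4) <= t i j).
  { intros i j Hi. induction j. simpl. lra.
    rewrite htF by auto. rewrite S_INR.
    assert (H0 := htpos i j Hi). assert (H1 := htpos i 0%nat Hi).
    assert (H2 := Fpot_grow d (t i j) hd ltac:(lra)).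
    assert (H3 : t i 0%nat <= t i j) by (assert (0 <= INR j) by apply pos_INR; nra).
    assert (t i 0%nat * t i 0%nat <= t i j * t i j) by nra. nra. }
  destruct (fin_J m (fun i J => forall j, (J <= j)%nat -> T <= t i j)) as [J HJ].
  { intros i J1 J2 H12 HP j Hj. apply HP. lia. }
  { intros i Hi. set (q := t i 0%nat * t i 0%nat / 4).
    assert (Hq : 0 < q) by (unfold q; assert (H0 := htpos i 0%nat Hi); nra).
    exists (Z.to_nat (up (T / q))). intros j Hj.
    assert (H1 := archimed (T / q)).
    assert (H2 : IZR (up (T / q)) <= INR j).
    { destruct (Z_le_gt_dec 0 (up (T / q))) as [Hz|Hz].
      - rewrite <- (Z2Nat.id (up (T / q))) by auto. rewrite <- INR_IZR_INZ. apply le_INR. auto.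
      - assert (IZR (up (T/q)) <= 0) by (apply IZR_le; lia). assert (0 <= INR j) by apply pos_INR. lra. }
    assert (H3 := Hgrow i j Hi). assert (H4 := htpos i 0%nat Hi).
    assert (T <= INR j * q).
    { assert (T / q * q = T) by (field; lra). assert (T / q <= INR j) by lra. nra. }
    unfold q in *. lra. }
  exists J. intros i j k l HJj Hi Hk Hneq Hcl H HH.
  destruct HH as [HH0 [HHsep HHmid]].
  set (t0 := t i j).
  assert (Ht0 : T <= t0) by (apply HJ; auto).
  assert (Hti : forall n, t i (j + n)%nat = Nat.iter n (Fpot d) t0).
  { induction n. rewrite Nat.add_0_r. reflexivity. rewrite Nat.add_succ_r, htF by auto. rewrite IHn. reflexivity. }
  assert (Htk : forall n, t k (l + n)%nat = Nat.iter n (Fpot d) t0).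
  { induction n. rewrite Nat.add_0_r. destruct Hcl as [Hc1 _]. unfold t0. rewrite Hc1. reflexivity.
    rewrite Nat.add_succ_r, htF by auto. rewrite IHn. reflexivity. }
  assert (Inv : forall n, (n <= H)%nat -> exists L, Rabs (fst L) <= Sp d t0 n / 2 /\ Rabs (snd L) <= Sp d t0 n / 2 /\
      Cmult (Cminus (a k (l + n)%nat) (a i (j + n)%nat)) (cexp L) = Cmult (RtoC (Dn d n t0)) (Cminus (a k l) (a i j))).
  { induction n; intros Hn.
    - exists (RtoC 0). simpl. rewrite !Nat.add_0_r, cexp_0, Rabs_R0. split; [lra| split; [lra|]]. ring.
    - destruct (IHn ltac:(lia)) as [L [HL1 [HL2 HL3]]].
      set (tau := Nat.iter n (Fpot d) t0).
      assert (Hcn : same_cluster t s i (j + n) k (l + n)).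
      { destruct n. rewrite !Nat.add_0_r. auto. apply HHmid. lia. }
      destruct Hcn as [Htn Hsn].
      assert (Htau : t i (j + n)%nat = tau) by apply Hti.
      assert (Htau_ge : T <= tau) by (assert (H0 := iter_ge d t0 n hd ltac:(lra)); unfold tau; lra).
      assert (HA := HK0 i (j + n)%nat Hi). assert (HB := HK0 k (l + n)%nat Hk).
      change (Cplus (RtoC (t i (j + n)%nat)) (Cmult (Cmult (RtoC (2 * PI)) Ci) (RtoC (IZR (s i (j + n)%nat) / INR d))))
        with (bpt d (t i (j + n)%nat) (s i (j + n)%nat)) in HA.
      change (Cplus (RtoC (t k (l + n)%nat)) (Cmult (Cmult (RtoC (2 * PI)) Ci) (RtoC (IZR (s k (l + n)%nat) / INR d))))
        with (bpt d (t k (l + n)%nat) (s k (l + n)%nat)) in HB.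
      rewrite <- Htn, <- Hsn in HB. rewrite Htau in HA, HB.
      assert (Hexp := exp_pos (- tau / 2)).
      assert (HA' : Cmod (Cminus (a i (j + n)%nat) (bpt d tau (s i (j + n)%nat))) <= K * exp (- tau / 2)) by nra.
      assert (HB' : Cmod (Cminus (a k (l + n)%nat) (bpt d tau (s i (j + n)%nat))) <= K * exp (- tau / 2)) by nra.
      assert (HMt : M * exp (- tau / 6) <= /4) by (apply Tstar_ok; auto; unfold T in Htau_ge; lra).
      destruct (step_lambda d c K tau (s i (j + n)%nat) _ _ hd HK1 ltac:(lra) HMt HA' HB') as [lam [Hl1 [Hl2 Hl3]]].
      exists (Cplus L lam). simpl Sp. fold tau.
      split; [|split].
      + simpl. eapply Rle_trans. apply Rabs_triang. lra.
      + simpl. eapply Rle_trans. apply Rabs_triang. lra.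
      + rewrite !Nat.add_succ_r, !horbit by auto.
        rewrite cexp_add.
        transitivity (Cmult (Cmult (Cminus (f0 d c (a k (l + n)%nat)) (f0 d c (a i (j + n)%nat))) (cexp lam)) (cexp L)).
        ring. rewrite Hl3.
        transitivity (Cmult (RtoC (INR d * exp (INR d * tau))) (Cmult (Cminus (a k (l + n)%nat) (a i (j + n)%nat)) (cexp L))).
        ring. rewrite HL3. simpl Dn. fold tau. rewrite (RtoC_mult (INR d * exp (INR d * tau))). ring. }
  destruct (Inv H (le_n H)) as [L [HL1 [HL2 HL3]]].
  assert (HDer : Derive (fun x => Nat.iter H (Fpot d) x) t0 = Dn d H t0) by (apply is_derive_unique, iter_derive).
  assert (HDpos := Dn_pos d H t0 hd).
  assert (HSpH : Sp d t0 H = Abound d t0 (H - 1)).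
  { replace H with (S (H - 1)) at 1 by lia. apply Sp_Abound. }
  assert (HSp2 : Sp d t0 H <= 2).
  { assert (H1 := Sp_bound d t0 H hd ltac:(lra)). assert (H2 := exp_pos (- Nat.iter H (Fpot d) t0 / 3)).
    assert (H3 : exp (- t0 / 3) <= 1) by (rewrite <- exp_0; apply exp_le; lra). lra. }
  assert (HSp0 := Sp_pos d t0 H HH0).
  assert (HPI := PI2_3_2).
  assert (Hds : IZR (s k (l + H)%nat - s i (j + H)%nat)%Z <> 0).
  { intro E. apply HHsep. split. rewrite Hti, Htk. reflexivity.
    apply eq_IZR_R0 in E. lia. }
  exists (cexp L).
  exists (Cdiv (Cmult (RtoC (INR d)) (Cminus (a k (l + H)%nat) (a i (j + H)%nat)))
           (Cmult (Cmult (RtoC (2 * PI)) Ci) (RtoC (IZR (s k (l + H)%nat - s i (j + H)%nat)%Z)))).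
  split; [|split].
  - unfold in_A. fold t0. rewrite <- HSpH. split; [apply cexp_neq0|split].
    + rewrite Cmod_cexp, ln_exp. lra.
    + exists (snd L). assert (HL2' := HL2). apply Rabs_le_between in HL2'. split. unfold is_arg. split. split; lra.
      * rewrite Cmod_cexp. destruct L. reflexivity.
      * lra.
  - unfold in_D. exists (a k (l + H)%nat), (a i (j + H)%nat). split; [|split].
    + unfold in_disk. replace (Cminus (a k (l + H)%nat) (a k (l + H)%nat)) with (RtoC 0) by (unfold Cminus; ring).
      rewrite Cmod_0. apply Rinv_0_lt_compat. apply lt_0_INR. lia.
    + unfold in_disk. replace (Cminus (a i (j + H)%nat) (a i (j + H)%nat)) with (RtoC 0) by (unfold Cminus; ring).
      rewrite Cmod_0. apply Rinv_0_lt_compat. apply lt_0_INR. lia.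
    + reflexivity.
  - fold t0. rewrite HDer.
    assert (HZ : Cmult (Cmult (RtoC (2 * PI)) Ci) (RtoC (IZR (s k (l + H)%nat - s i (j + H)%nat)%Z)) <> RtoC 0).
    { intro E. apply (f_equal Cmod) in E. rewrite !Cmod_mult, Cmod_Ci, !Cmod_R, Rabs_R0 in E.
      assert (Rabs (2 * PI) <> 0) by (rewrite Rabs_right; lra).
      assert (Rabs (IZR (s k (l + H)%nat - s i (j + H)%nat)%Z) <> 0) by (intro E2; apply Hds; apply Rabs_eq_0 in E2; auto).
      apply Rmult_integral in E. destruct E as [E|E]; [|contradiction]. lra. }
    assert (HDn : RtoC (INR d) <> RtoC 0) by (apply RtoC_neq0; lra).
    assert (HDH : RtoC (Dn d H t0) <> RtoC 0) by (apply RtoC_neq0; lra).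
    set (Z := Cmult (Cmult (RtoC (2 * PI)) Ci) (RtoC (IZR (s k (l + H)%nat - s i (j + H)%nat)%Z))) in *.
    transitivity (Cdiv (Cmult (Cminus (a k (l + H)%nat) (a i (j + H)%nat)) (cexp L)) (RtoC (Dn d H t0))).
    + rewrite HL3. field. auto.
    + field. auto.
Qed.
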